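(* Let $T$ be a trunk of an order $P$. Any two chains $C,C'\subseteq T$ that are maximal among the chains contained in $T$ are order-isomorphic (in particular they have the same cardinality). Moreover, if $T$ is a full trunk of $P$, then every element of $T$ belongs to a chain contained in $T$ that is order-isomorphic to a maximum chain of $P$.
   Context: Orders are partial orders; $x\sim y$ means $x\ne y$ and $x,y$ incomparable. A trunk of $P$ is a subset $T$ (with the induced order) such that for all pairwise distinct $x,y,z\in T$, $x\sim y$ and $y\sim z$ imply $x\sim z$. A chain of $P$ is maximum if it is maximal under inclusion and no chain of $P$ has greater cardinality (for a well-founded order: greater order type). A full trunk is a trunk containing at least one maximum chain of $P$. *)

(* Defs.v *)
From HB Require Import structures.
From mathcomp Require Import all_boot all_order.
Set Implicit Arguments. Unset Strict Implicit. Unset Printing Implicit Defensive.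
Import Order.TTheory.
Local Open Scope order_scope.

Section Defs.
Context {d : Order.disp_t} {P : porderType d}.

Definition psubset (A B : P -> Prop) : Prop := forall x, A x -> B x.

Definition incomp (x y : P) : Prop := x <> y /\ ~ (x <= y) /\ ~ (y <= x).

Definition trunk (T : P -> Prop) : Prop :=
  forall x y z, T x -> T y -> T z -> x <> y -> y <> z -> x <> z ->
    incomp x y -> incomp y z -> incomp x z.

Definition chain (C : P -> Prop) : Prop :=
  forall x y, C x -> C y -> x <= y \/ y <= x.

Definition maximal_chain_in (S C : P -> Prop) : Prop :=
  chain C /\ psubset C S /\
  forall D, chain D -> psubset D S -> psubset C D -> psubset D C.

Definition order_iso (A B : P -> Prop) : Prop :=
  exists (f : {x | A x} -> {x | B x}) (g : {x | B x} -> {x | A x}),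
    cancel f g /\ cancel g f /\
    forall a b, (proj1_sig a <= proj1_sig b) <-> (proj1_sig (f a) <= proj1_sig (f b)).

Definition card_le (A B : P -> Prop) : Prop :=
  exists f : {x | A x} -> {x | B x}, injective f.

Definition card_gt (D C : P -> Prop) : Prop := card_le C D /\ ~ card_le D C.

Definition wf_order : Prop := well_founded (fun x y : P => x < y).

Definition proper_initial_segment (I D : P -> Prop) : Prop :=
  psubset I D /\ (forall x y, D x -> I y -> x <= y -> I x) /\
  exists z, D z /\ ~ I z.

(* for well-ordered chains: ordertype(D) > ordertype(C) iff C is isomorphic
   to a proper initial segment of D *)
Definition otype_gt (D C : P -> Prop) : Prop :=
  exists I, proper_initial_segment I D /\ order_iso C I.

(* maximum chain: maximal under inclusion, and no chain has greater cardinality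
   (for a well-founded order: greater order type) *)
Definition maximum_chain (C : P -> Prop) : Prop :=
  maximal_chain_in (fun _ => True) C /\
  (wf_order -> forall D, chain D -> ~ otype_gt D C) /\
  (~ wf_order -> forall D, chain D -> ~ card_gt D C).

Definition full_trunk (T : P -> Prop) : Prop :=
  trunk T /\ exists M, maximum_chain M /\ psubset M T.

End Defs.

(* Main.v *)
From Stdlib Require Import ClassicalEpsilon ProofIrrelevance.
Require Import Defs.
From HB Require Import structures.
From mathcomp Require Import all_boot all_order.
Set Implicit Arguments. Unset Strict Implicit. Unset Printing Implicit Defensive.
Import Order.TTheory.
Local Open Scope order_scope.

Section Aux.
Context {d : Order.disp_t} {P : porderType d}.

Definition sim (x y : P) := ~ (x < y) /\ ~ (y < x).

Lemma sim_refl (x : P) : sim x x.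
Proof. by split; rewrite ltxx. Qed.

Lemma sim_sym (x y : P) : sim x y -> sim y x.
Proof. by case. Qed.

Lemma sim_incomp (x y : P) : x <> y -> sim x y -> incomp x y.
Proof.
move=> ne [h1 h2]; split=> //; split.
- rewrite le_eqVlt => /orP [/eqP//|//].
- rewrite le_eqVlt => /orP [/eqP e|//]; by apply: ne.
Qed.

Lemma incomp_sim (x y : P) : incomp x y -> sim x y.
Proof. by move=> [_ [h1 h2]]; split => /ltW. Qed.

Lemma nsim (x y : P) : ~ sim x y -> x < y \/ y < x.
Proof.
move=> h; case: (boolP (x < y)) => [h1|/negP h1]; first by left.
case: (boolP (y < x)) => [h2|/negP h2]; first by right.
by exfalso; apply: h.
Qed.

Lemma nle_sim (x y : P) : ~ (x <= y \/ y <= x) -> sim x y.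
Proof. by move=> h; split => /ltW => ?; apply: h; auto. Qed.

Lemma sig_eq (A : P -> Prop) (u v : {x | A x}) :
  proj1_sig u = proj1_sig v -> u = v.
Proof. case: u => u hu; case: v => v hv /= e; subst; f_equal; apply: proof_irrelevance. Qed.

Variable T : P -> Prop.
Hypothesis hT : trunk T.

Lemma sim_trans x y z : T x -> T y -> T z -> sim x y -> sim y z -> sim x z.
Proof.
move=> tx ty tz h1 h2.
case: (eqVneq x y) => [e|nxy]; first by subst.
case: (eqVneq y z) => [e|nyz]; first by subst.
case: (eqVneq x z) => [e|nxz]; first by subst; apply: sim_refl.
apply: incomp_sim; apply: (hT tx ty tz) => //; try exact/eqP.
- by apply: sim_incomp => //; apply/eqP.
- by apply: sim_incomp => //; apply/eqP.
Qed.

Lemma lt_sim a a' b b' : T a -> T a' -> T b -> T b' ->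
  sim a a' -> sim b b' -> a < b -> a' < b'.
Proof.
move=> ta ta' tb tb' ha hb lab.
have nab : ~ sim a b by case => h _; apply: h.
have : ~ sim a' b'.
  move=> h; apply: nab; apply: (sim_trans ta ta' tb) => //.
  apply: (sim_trans ta' tb' tb) => //; exact: sim_sym.
move/nsim => [//|lba].
have : ~ sim a b'.
  move=> h; apply: nab; apply: (sim_trans ta tb' tb) => //; exact: sim_sym.
move/nsim => [l|l].
- by exfalso; case: ha => h _; apply: h; apply: lt_trans l lba.
- by exfalso; case: hb => _ h; apply: h; apply: lt_trans l lab.
Qed.

Lemma chain_sim_eq C c c' : chain C -> C c -> C c' -> sim c c' -> c = c'.
Proof.
move=> hC hc hc' [h1 h2]; case: (hC _ _ hc hc');
  rewrite le_eqVlt => /orP [/eqP//|h]; by exfalso; auto.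
Qed.

Lemma max_exists C y : maximal_chain_in T C -> T y -> exists c, C c /\ sim y c.
Proof.
move=> [hC [hCT hmax]] ty; apply: NNPP => H.
have hy : forall c, C c -> y <= c \/ c <= y.
  move=> c cc; have : ~ sim y c by move=> s; apply: H; exists c.
  by move/nsim => [l|l]; [left|right]; apply: ltW.
pose D := fun z => C z \/ z = y.
have : D y by right.
move/(hmax D) => /=.
have hD : chain D.
  move=> u v [hu|->] [hv|->]; [exact: hC| |auto|by left].
  by case: (hy _ hu); auto.
move=> /(_ hD) h.
have cy : C y.
  apply: h; [by move=> z [hz|->]; [apply: hCT|] | by move=> z hz; left].
by apply: H; exists y; split=> //; apply: sim_refl.
Qed.

Lemma iso_max C C' : maximal_chain_in T C -> maximal_chain_in T C' -> order_iso C C'.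
Proof.
move=> hC hC'.
have hCT := proj1 (proj2 hC); have hCT' := proj1 (proj2 hC').
have ex1 : forall c : {x | C x}, exists c' : {x | C' x}, sim (proj1_sig c) (proj1_sig c').
  move=> [c cc] /=; have [c' [h1 h2]] := max_exists hC' (hCT _ cc).
  by exists (exist _ c' h1).
have ex2 : forall c : {x | C' x}, exists c' : {x | C x}, sim (proj1_sig c) (proj1_sig c').
  move=> [c cc] /=; have [c' [h1 h2]] := max_exists hC (hCT' _ cc).
  by exists (exist _ c' h1).
pose f := fun c => proj1_sig (constructive_indefinite_description _ (ex1 c)).
pose g := fun c => proj1_sig (constructive_indefinite_description _ (ex2 c)).
have hf : forall c, sim (proj1_sig c) (proj1_sig (f c)).
  by move=> c; rewrite /f; case: constructive_indefinite_description.
have hg : forall c, sim (proj1_sig c) (proj1_sig (g c)).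
  by move=> c; rewrite /g; case: constructive_indefinite_description.
have tC : forall c : {x | C x}, T (proj1_sig c) by move=> [c cc]; apply: hCT.
have tC' : forall c : {x | C' x}, T (proj1_sig c) by move=> [c cc]; apply: hCT'.
have mono : forall a b, proj1_sig a < proj1_sig b -> proj1_sig (f a) < proj1_sig (f b).
  move=> a b l; apply: (lt_sim (tC a) (tC' (f a)) (tC b) (tC' (f b))) => //.
exists f, g; split; [|split].
- move=> c; apply: sig_eq; symmetry; apply: (chain_sim_eq (proj1 hC)).
  + exact: proj2_sig.
  + exact: proj2_sig.
  + exact: (sim_trans (tC c) (tC' (f c)) (tC (g (f c))) (hf c) (hg (f c))).
- move=> c; apply: sig_eq; symmetry; apply: (chain_sim_eq (proj1 hC')).
  + exact: proj2_sig.
  + exact: proj2_sig.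
  + exact: (sim_trans (tC' c) (tC (g c)) (tC' (f (g c))) (hg c) (hf (g c))).
- move=> a b; split.
  + rewrite le_eqVlt => /orP [/eqP e|l].
    * by have -> : a = b by apply: sig_eq.
    * by apply: ltW; apply: mono.
  + move=> h; case: (proj1 hC _ _ (proj2_sig a) (proj2_sig b)) => //.
    rewrite le_eqVlt => /orP [/eqP e|l]; first by rewrite e.
    by have := mono _ _ l => /lt_geF; rewrite h.
Qed.

End Aux.

Theorem theorem5p4 (d : Order.disp_t) (P : porderType d) (T : P -> Prop)
  (hT : trunk T) :
  (forall C C' : P -> Prop,
      maximal_chain_in T C -> maximal_chain_in T C' -> order_iso C C') /\
  (full_trunk T ->
     forall x, T x ->
       exists C : P -> Prop, chain C /\ psubset C T /\ C x /\
         exists M : P -> Prop, maximum_chain M /\ order_iso C M).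
Proof.
split; first by move=> C C'; apply: iso_max.
move=> [_ [M [hM hMT]]] x tx.
have [[hMc [_ hMmax]] _] := hM.
have hMT' : maximal_chain_in T M.
  split=> //; split=> // D hD hDT hMD; apply: hMmax => //.
pose C := fun y => y = x \/ (M y /\ (x <= y \/ y <= x)).
have hCc : chain C.
  move=> u v [->|[mu cu]] [->|[mv cv]]; first (by left);
    [by case: cv; auto| by case: cu; auto| exact: hMc].
have hCT : psubset C T by move=> u [->|[mu _]] //; apply: hMT.
have hCmax : maximal_chain_in T C.
  split=> //; split=> // D hD hDT hCD z dz.
  have dx : D x by apply: hCD; left.
  have tz := hDT _ dz.
  case: (eqVneq z x) => [->|nzx]; first by left.
  have czx : x <= z \/ z <= x by apply: hD.
  right; split=> //.
  pose D' := fun w => M w \/ w = z.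
  have : D' z by right.
  apply: hMmax => //; last by move=> w hw; left.
  move=> u v [mu|->] [mv|->]; [exact: hMc| | |by left].
  - case: (boolP (u <= z)) => [h1|/negP h1]; first by left.
    case: (boolP (z <= u)) => [h2|/negP h2]; first by right.
    exfalso.
    case: (boolP (x <= u)) => [xu|/negP h3].
      have Du : D u by apply: hCD; right; split=> //; left.
      by case: (hD _ _ Du dz).
    case: (boolP (u <= x)) => [ux|/negP h4].
      have Du : D u by apply: hCD; right; split=> //; right.
      by case: (hD _ _ Du dz).
    have s1 : sim z u by apply: nle_sim => -[]; auto.
    have s2 : sim u x by apply: nle_sim => -[]; auto.
    have := sim_trans hT tz (hMT _ mu) tx s1 s2 => -[a b].
    case: czx; rewrite le_eqVlt => /orP [/eqP e|l]; try (by subst; rewrite eqxx in nzx);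
      try by auto.
  - case: (boolP (v <= z)) => [h1|/negP h1]; first by right.
    case: (boolP (z <= v)) => [h2|/negP h2]; first by left.
    exfalso.
    case: (boolP (x <= v)) => [xu|/negP h3].
      have Du : D v by apply: hCD; right; split=> //; left.
      by case: (hD _ _ Du dz).
    case: (boolP (v <= x)) => [ux|/negP h4].
      have Du : D v by apply: hCD; right; split=> //; right.
      by case: (hD _ _ Du dz).
    have s1 : sim z v by apply: nle_sim => -[]; auto.
    have s2 : sim v x by apply: nle_sim => -[]; auto.
    have := sim_trans hT tz (hMT _ mv) tx s1 s2 => -[a b].
    case: czx; rewrite le_eqVlt => /orP [/eqP e|l]; try (by subst; rewrite eqxx in nzx);
      try by auto.
exists C; split=> //; split=> //; split; first by left.
exists M; split=> //; exact: iso_max hCmax hMT'.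
Qed.
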